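(* Let $U,V\subseteq M$ be open and let $\Psi:U\to V$ be a diffeomorphism with $\Psi^*t=t$. Then: (1) for every covariant tensor $\omega$ on $V$, $j_*\Psi^*\omega=j_*\Psi^*j_*\omega$; (2) for every $(n+1)$-form $\omega$ and spatial vector field $S$ on $V$, $j_*\Psi^*(S\lrcorner\omega)=0$; (3) if additionally $\Psi$ is the identity on $\Sigma_{t_0}\cap U$ for some $t_0$, and $B$ is a spatial tensor field on $V$, then $j_*\Psi^*B=B$ on $\Sigma_{t_0}\cap U$.
   Context: $M=\Sigma\times I$, where $\Sigma\subseteq\mathbb R^n$ is open with coordinates $x^1,\dots,x^n$ and $I\subseteq\mathbb R$ is an open interval with coordinate $t$; $\Sigma_t=\Sigma\times\{t\}$. A tensor is spatial if it vanishes whenever one of its arguments is $dt$ or $\partial_t$. The projection $j_*$ onto spatial tensors is defined by $j_*dt=0$, $j_*dx^i=dx^i$, $j_*\partial_t=0$, $j_*\partial_{x^i}=\partial_{x^i}$, extended by $j_*T(\cdot,\dots,\cdot)=T(j_*\cdot,\dots,j_*\cdot)$. The pullback $\Psi^*$ acts on vectors by $\Psi^*Y=(\Psi^{-1})_*Y$ and hence on arbitrary tensors. *)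

(* Defs.v *)
From HB Require Import structures.
From mathcomp Require Import all_boot all_order all_algebra.
From mathcomp Require Import all_classical all_reals all_analysis.
Set Implicit Arguments. Unset Strict Implicit. Unset Printing Implicit Defensive.
Import Order.TTheory GRing.Theory Num.Theory.
Import numFieldNormedType.Exports.
Local Open Scope classical_set_scope.
Local Open Scope ring_scope.

(* M = Sigma x I is an open subset of R^(n+1).  Points, tangent vectors and
   cotangent vectors are all represented by row vectors 'rV[R]_(n.+1) of
   components: indices 0..n-1 are the spatial coordinates x^1..x^n, and the
   last index (ord_max) is the time coordinate t.  A tangent vector v stands
   for sum_i v_i d/dx^i ; a covector a stands for sum_i a_i dx^i. *)

Definition pt (R : realType) n := 'rV[R]_(n.+1).

Definition tix n : 'I_(n.+1) := ord_max.
Definition tcoord (R : realType) n (p : pt R n) : R := p 0 (tix n).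
Definition xpart (R : realType) n (p : pt R n) : 'rV[R]_n :=
  \row_(i < n) p 0 (widen_ord (leqnSn n) i).

Definition Mset (R : realType) n (Sig : set 'rV[R]_n) (I : set R) : set (pt R n) :=
  [set p | Sig (xpart p) /\ I (tcoord p)].
Definition slice (R : realType) n (Sig : set 'rV[R]_n) (I : set R) (t0 : R)
  : set (pt R n) := [set p | Mset Sig I p /\ tcoord p = t0].

(* basis vectors e_i (= d/dx^i as vectors, dx^i as covectors) *)
Definition ebasis (R : realType) n (i : 'I_(n.+1)) : pt R n := delta_mx 0 i.
Definition dtc (R : realType) n : pt R n := ebasis R (tix n).
Definition dtv (R : realType) n : pt R n := ebasis R (tix n).

Definition pair (R : realType) n (a v : pt R n) : R := \sum_i a 0 i * v 0 i.

(* the projection j_* on vectors and on covectors: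
   j_* d/dt = 0, j_* d/dx^i = d/dx^i, j_* dt = 0, j_* dx^i = dx^i *)
Definition jproj (R : realType) n (v : pt R n) : pt R n :=
  \row_i (if i == tix n then 0 else v 0 i).

(* A tensor field of type (r,s) : at each point p, a function of r covector
   arguments and s vector arguments. *)
Definition tensor (R : realType) n (r s : nat) :=
  pt R n -> ('I_r -> pt R n) -> ('I_s -> pt R n) -> R.

Definition upd (T : Type) k (a : 'I_k -> T) (i : 'I_k) (x : T) : 'I_k -> T :=
  fun j => if j == i then x else a j.

Definition multilinear (R : realType) n k (f : ('I_k -> pt R n) -> R) :=
  forall (a : 'I_k -> pt R n) (i : 'I_k) (c : R) (x y : pt R n),
    f (upd a i (c *: x + y)) = c * f (upd a i x) + f (upd a i y).

Fixpoint Dseq (R : realType) n (W : normedModType R) (vs : seq (pt R n))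
    (f : pt R n -> W) : pt R n -> W :=
  match vs with
  | [::] => f
  | v :: vs' => fun p => 'D_v (Dseq vs' f) p
  end.

Definition smooth_on (R : realType) n (W : normedModType R) (D : set (pt R n))
    (f : pt R n -> W) :=
  forall (vs : seq (pt R n)) (p : pt R n), D p -> differentiable (Dseq vs f) p.

Definition tensor_field (R : realType) n r s (D : set (pt R n)) (T : tensor R n r s) :=
  (forall p, D p ->
     (forall X, multilinear (fun A => T p A X)) /\
     (forall A, multilinear (fun X => T p A X))) /\
  (forall A X, smooth_on D (fun p => T p A X : R^o)).

Definition form_on (R : realType) n k (D : set (pt R n)) (w : tensor R n 0 k) :=
  tensor_field D w /\
  forall p, D p -> forall A (X : 'I_k -> pt R n) (i j : 'I_k),
    i != j -> X i = X j -> w p A X = 0.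

Definition vector_field (R : realType) n (D : set (pt R n)) (S : pt R n -> pt R n) :=
  smooth_on D S.

Definition spatial_tensor (R : realType) n r s (D : set (pt R n)) (T : tensor R n r s) :=
  forall p, D p -> forall A X,
    ((exists k, A k = dtc R n) \/ (exists k, X k = dtv R n)) -> T p A X = 0.

Definition spatial_vector_field (R : realType) n (D : set (pt R n))
    (S : pt R n -> pt R n) :=
  forall p, D p -> pair (dtc R n) (S p) = 0.

Definition jT (R : realType) n r s (T : tensor R n r s) : tensor R n r s :=
  fun p A X => T p (fun k => jproj (A k)) (fun k => jproj (X k)).

(* alpha o L  for a covector alpha and linear map L *)
Definition copull (R : realType) n (L : pt R n -> pt R n) (a : pt R n) : pt R n :=
  \row_i pair a (L (ebasis R i)).

(* Pullback by Psi (with inverse Phi):  on vectors Psi^*Y = (Psi^{-1})_*Y,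
   on covectors Psi^*a = a o dPsi, hence on tensors
   (Psi^*T)_p(b.., w..) = T_{Psi p}(b.. o dPhi_{Psi p}, dPsi_p w..). *)
Definition pullback (R : realType) n r s (Psi Phi : pt R n -> pt R n)
    (T : tensor R n r s) : tensor R n r s :=
  fun p A X => T (Psi p) (fun k => copull ('d Phi (Psi p)) (A k))
                         (fun k => 'd Psi p (X k)).

Definition cons_arg (T : Type) k (x : T) (a : 'I_k -> T) : 'I_k.+1 -> T :=
  fun i => if unlift ord0 i is Some j then a j else x.
Definition inner_prod (R : realType) n k (S : pt R n -> pt R n)
    (w : tensor R n 0 k.+1) : tensor R n 0 k :=
  fun p A X => w p A (cons_arg (S p) X).

Definition diffeo (R : realType) n (U V : set (pt R n)) (Psi Phi : pt R n -> pt R n) :=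
  open U /\ open V /\
  (forall p, U p -> V (Psi p)) /\ (forall q, V q -> U (Phi q)) /\
  (forall p, U p -> Phi (Psi p) = p) /\ (forall q, V q -> Psi (Phi q) = q) /\
  smooth_on U Psi /\ smooth_on V Phi.

(* Main.v *)
Require Import Defs.
From HB Require Import structures.
From mathcomp Require Import all_boot all_order all_algebra.
From mathcomp Require Import all_classical all_reals all_analysis.
Import Order.TTheory GRing.Theory Num.Theory.
Import numFieldNormedType.Exports.
Local Open Scope classical_set_scope.
Local Open Scope ring_scope.

Section S.
Context {R : realType} {n : nat}.

Lemma pair_er (a : pt R n) i : pair a (ebasis R i) = a 0 i.
Proof.
rewrite /pair (bigD1 i) //= big1 ?addr0; last first.
  by move=> j /negbTE ji; rewrite !mxE ji andbF mulr0.
by rewrite !mxE !eqxx mulr1.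
Qed.

Lemma pair_el (a : pt R n) i : pair (ebasis R i) a = a 0 i.
Proof.
rewrite /pair (bigD1 i) //= big1 ?addr0; last first.
  by move=> j /negbTE ji; rewrite !mxE ji andbF mul0r.
by rewrite !mxE !eqxx mul1r.
Qed.

Lemma jproj_id (y : pt R n) : y 0 (tix n) = 0 -> jproj y = y.
Proof.
move=> h; apply/matrixP => i j; rewrite !mxE ord1.
by case: eqP => // ->; rewrite h.
Qed.

Lemma jproj_t (y : pt R n) : (jproj y) 0 (tix n) = 0.
Proof. by rewrite !mxE eqxx. Qed.

Lemma decomp (v : pt R n) : v = v 0 (tix n) *: ebasis R (tix n) + jproj v.
Proof.
apply/matrixP => i j; rewrite !mxE ord1 eqxx /=.
by case: eqP => [->|_]; rewrite ?mulr1 ?addr0 ?mulr0 ?add0r.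
Qed.

Lemma ml_zero k (f : ('I_k -> pt R n) -> R) a i :
  multilinear f -> f (upd a i 0) = 0.
Proof.
move=> ml; have := ml a i 1 0 0.
rewrite scaler0 addr0 mul1r => h.
by apply: (addrI (f (upd a i 0))); rewrite addr0 -h.
Qed.

Lemma ml_sum k (f : ('I_k -> pt R n) -> R) a i (J : finType) (c : J -> R) x :
  multilinear f ->
  f (upd a i (\sum_j c j *: x j)) = \sum_j c j * f (upd a i (x j)).
Proof.
move=> ml; elim/big_rec2: _ => [|j y1 y2 _ <-]; first exact: ml_zero.
by rewrite ml.
Qed.

Lemma alt_zero (f : ('I_n.+1 -> pt R n) -> R) :
  multilinear f ->
  (forall (X : 'I_n.+1 -> pt R n) i j, i != j -> X i = X j -> f X = 0) ->
  forall X : 'I_n.+1 -> pt R n, (forall j, X j 0 (tix n) = 0) -> f X = 0.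
Proof.
move=> ml alt X Xt.
pose M : 'M[R]_(n.+1) := \matrix_(i, j) X i 0 j.
have dM : \det M == 0.
  rewrite -det_tr; apply/det0P; exists (delta_mx 0 (tix n)).
    apply/negP => /eqP/matrixP/(_ 0 (tix n)); rewrite !mxE !eqxx /=.
    by move/eqP; rewrite oner_eq0.
  by rewrite -rowE; apply/matrixP => a b; rewrite !mxE Xt.
have [u u0 uM] := det0P dM.
have [j uj] : exists j, u 0 j != 0.
  apply/existsP; apply: contraR u0 => /existsPn H.
  by apply/eqP/matrixP => a b; rewrite ord1 !mxE; apply/eqP; have := H b; rewrite negbK.
have rM i : row i M = X i by apply/matrixP => a b; rewrite ord1 !mxE.
have := @ml_zero _ f X j ml.
rewrite -uM mulmx_sum_row.
under eq_bigr do rewrite rM.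
rewrite ml_sum // (bigD1 j) //= big1 ?addr0.
  have -> : upd X j (X j) = X by apply/funext => i; rewrite /upd; case: eqP => // ->.
  by move/eqP; rewrite mulf_eq0 (negbTE uj) /= => /eqP.
move=> i ij; rewrite (alt _ i j) ?mulr0 //.
  by rewrite /upd (negbTE ij) eqxx.
Qed.


Lemma kill {k} {f : ('I_k -> pt R n) -> R} :
  multilinear f -> (forall (Y : 'I_k -> pt R n) i, Y i = ebasis R (tix n) -> f Y = 0) ->
  forall Y : 'I_k -> pt R n, f Y = f (fun i => jproj (Y i)).
Proof.
move=> ml kz Y.
suff H : forall m, f Y = f (fun i : 'I_k => if (i < m)%N then jproj (Y i) else Y i).
  by rewrite (H k); congr f; apply/funext => i; rewrite ltn_ord.
elim=> [|m IH]; first by congr f; apply/funext.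
rewrite IH.
case: (ltnP m k) => mk; last first.
  congr f; apply/funext => i.
  have im : (i < m)%N by apply: leq_trans (ltn_ord i) mk.
  by rewrite im ltnS (ltnW im).
set Z := fun i : 'I_k => if (i < m)%N then jproj (Y i) else Y i.
pose i0 := Ordinal mk.
transitivity (f (upd Z i0 (Y i0))).
  congr f; apply/funext => i; rewrite /upd /Z.
  by case: (eqVneq i i0) => [->|] //=; rewrite ltnn.
rewrite {1}(decomp (Y i0)) ml (kz _ i0) ?mulr0 ?add0r; last by rewrite /upd eqxx.
congr f; apply/funext => i; rewrite /upd /Z.
case: (eqVneq i i0) => [->|ne] /=; first by rewrite ltnS leqnn.
have ne' : (nat_of_ord i == m) = false by apply/negbTE.
by rewrite ltnS [in RHS]leq_eqVlt ne'.
Qed.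


Lemma line_eq_derive (f g : pt R n -> pt R n) (a v : pt R n) :
  (\forall h \near (0:R), f (h *: v + a) = g (h *: v + a)) -> 'D_v f a = 'D_v g a.
Proof.
move=> fg.
have fga : f a = g a by have := nbhs_singleton fg; rewrite scale0r add0r.
rewrite /derive; congr (lim _).
rewrite eqEsubset; split; apply/near_eq_cvg/cvg_within; near=> h;
  rewrite /= fga (near fg h) //.
Unshelve. all: by end_near. Qed.

Lemma near_line (U : set (pt R n)) (p v : pt R n) :
  open U -> U p -> \forall h \near (0:R), U (h *: v + p).
Proof.
move=> oU Up.
have c : (fun h : R => h *: v + p) @ (0:R) --> p.
  rewrite -{2}(add0r p); apply: cvgD; last exact: cvg_cst.
  rewrite -(scale0r v); apply: cvgZ; [exact: cvg_id | exact: cvg_cst].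
by apply: c; apply: open_nbhs_nbhs; split.
Qed.

Lemma dtime (U : set (pt R n)) (F : pt R n -> pt R n) (q : pt R n) :
  open U -> U q -> differentiable F q ->
  (forall p, U p -> F p 0 (tix n) = p 0 (tix n)) ->
  forall v, ('d F q v) 0 (tix n) = v 0 (tix n).
Proof.
move=> oU Uq dF Ft v.
rewrite -deriveE // derive_mx; last exact: diff_derivable.
rewrite mxE.
have -> : 'D_v (fun x => F x 0 (tix n)) q = 'D_v (fun x : pt R n => x 0 (tix n)) q.
  apply: near_eq_derive; near=> x; apply: Ft; near: x.
  by apply: open_nbhs_nbhs; split.
have := @derive_mx _ _ 1 n.+1 (@id (pt R n)) q v (@derivable_id _ _ q v).
by rewrite derive_id => /matrixP/(_ 0 (tix n)); rewrite mxE => <-.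
Unshelve. all: by end_near. Qed.

Lemma dslice (F : pt R n -> pt R n) (p v : pt R n) :
  differentiable F p -> (\forall h \near (0:R), F (h *: v + p) = h *: v + p) ->
  'd F p v = v.
Proof.
move=> dF H; rewrite -deriveE // (@line_eq_derive _ id) ?derive_id //.
Qed.


Lemma killB r s (B : tensor R n r s) (p : pt R n) :
  (forall X, multilinear (fun A => B p A X)) ->
  (forall A, multilinear (fun X => B p A X)) ->
  (forall A X, ((exists k, A k = dtc R n) \/ (exists k, X k = dtv R n)) -> B p A X = 0) ->
  forall A X, B p A X = B p (fun k => jproj (A k)) (fun k => jproj (X k)).
Proof.
move=> mA mX sp A X.
have k1 : forall (Y : 'I_r -> pt R n) i, Y i = ebasis R (tix n) -> B p Y X = 0.
  by move=> Y i Yi; apply: sp; left; exists i.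
rewrite (kill (mA X) k1).
have k2 : forall (Y : 'I_s -> pt R n) i, Y i = ebasis R (tix n) ->
    B p (fun k => jproj (A k)) Y = 0.
  by move=> Y i Yi; apply: sp; right; exists i.
by rewrite (kill (mX _) k2).
Qed.

End S.

Theorem lemma4p1 (R : realType) (n : nat) (Sig : set 'rV[R]_n) (I : set R)
  (U V : set (pt R n)) (Psi Phi : pt R n -> pt R n) :
  open Sig -> open I -> is_interval I ->
  U `<=` Mset Sig I -> V `<=` Mset Sig I ->
  diffeo U V Psi Phi ->
  (forall p, U p -> tcoord (Psi p) = tcoord p) ->
  (* (1) *)
  (forall (k : nat) (w : tensor R n 0 k), tensor_field V w ->
     forall p, U p -> forall A X,
       jT (pullback Psi Phi w) p A X = jT (pullback Psi Phi (jT w)) p A X) /\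
  (* (2) *)
  (forall (w : tensor R n 0 n.+1) (S : pt R n -> pt R n),
     form_on V w -> vector_field V S -> spatial_vector_field V S ->
     forall p, U p -> forall A X,
       jT (pullback Psi Phi (inner_prod S w)) p A X = 0) /\
  (* (3) *)
  (forall t0 : R, (forall p, (slice Sig I t0 `&` U) p -> Psi p = p) ->
     forall (r s : nat) (B : tensor R n r s),
       tensor_field V B -> spatial_tensor V B ->
       forall p, (slice Sig I t0 `&` U) p -> forall A X,
         jT (pullback Psi Phi B) p A X = B p A X).
Proof.
move=> oSig oI iI UM VM [oU [oV [PsiUV [PhiVU [PhiPsi [PsiPhi [sPsi sPhi]]]]]]] tPsi.
have dPsi : forall p, U p -> differentiable Psi p := fun p Up => sPsi [::] p Up.
have dPt : forall p, U p -> forall x, ('d Psi p (jproj x)) 0 (tix n) = 0.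
  by move=> p Up x; rewrite (@dtime _ _ U Psi p oU Up (dPsi p Up) tPsi) jproj_t.
split; [|split].
- move=> k w _ p Up A X; rewrite /jT /pullback.
  congr (w _ _ _); apply/funext => i; first by case: i.
  by rewrite [RHS]jproj_id // dPt.
- move=> w S [[wml _] walt] _ Ssp p Up A X.
  rewrite /jT /pullback /inner_prod.
  have Vp : V (Psi p) := PsiUV p Up.
  apply: alt_zero; first exact: (wml _ Vp).2.
    by move=> Y i j; apply: walt.
  move=> j; rewrite /cons_arg; case: unliftP => [j' _|_]; first exact: dPt.
  by have := Ssp _ Vp; rewrite /dtc pair_el.
- move=> t0 Hid r s B [Bml _] Bsp p [[Mp tp] Up] A X.
  have Pp : Psi p = p by apply: Hid.
  have Vp : V p by rewrite -Pp; apply: PsiUV.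
  have line : forall v : pt R n, v 0 (tix n) = 0 ->
      \forall h \near (0:R), (slice Sig I t0 `&` U) (h *: v + p).
    move=> v vt; near=> h.
    have Uh : U (h *: v + p) by near: h; apply: near_line.
    split => //; split; first exact: UM.
    by rewrite /tcoord !mxE vt mulr0 add0r.
  have dPsiS : forall x, 'd Psi p (jproj x) = jproj x.
    move=> x; apply: dslice; first exact: dPsi.
    by apply: filterS (line _ (jproj_t x)) => h; apply: Hid.
  have dPhiS : forall i, i != tix n -> 'd Phi p (ebasis R i) = ebasis R i.
    move=> i it; apply: dslice; first exact: (sPhi [::] p Vp).
    have e0 : ebasis R i 0 (tix n) = 0 by rewrite mxE eqxx /= eq_sym (negbTE it).
    apply: filterS (line _ e0) => h Hh.
    by rewrite -{1}(Hid _ Hh) PhiPsi //; case: Hh.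
  have [mA mX] := Bml p Vp.
  rewrite /jT /pullback Pp.
  rewrite (@killB _ _ r s B p mA mX (Bsp p Vp)) [RHS](@killB _ _ r s B p mA mX (Bsp p Vp)).
  congr (B p _ _); apply/funext => k; last by rewrite dPsiS jproj_id // jproj_t.
  apply/matrixP => a b; rewrite !mxE.
  case: eqP => // /eqP bt.
  by rewrite (dPhiS b bt) pair_er mxE (negbTE bt).
Unshelve. all: by end_near. Qed.
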